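(* In the insurance game built on any stag hunt, the profile $A^n$ is the unique weakly maximal state and the unique strongly maximal state; in particular the insurance game is weakly acyclic.
   Context: A stag hunt has players $I=\{1,\dots,n\}$ with strategies $\{A,D\}$, a constant $c\in\mathbb{R}$ and, for each $i$, a function $f_i$ on subsets $T\subseteq I$ with $i\in T$, strictly increasing with respect to inclusion, with $f_i(I)>c$ and $f_i(\{i\})<c$; an adopter gets $f_i(T)$ where $T$ is the set of adopters, and a defector gets $c$. The insurance game built on it has players $I$, each with strategies $\{A,D,X\}$. For a profile $s$ let $T(s)=\{j: s_j\in\{A,X\}\}$. Each player $i$ has premium $\pi_i>0$ and reimbursement $R_i$; payoffs are $u_i(s)=c$ if $s_i=D$; $f_i(T(s))$ if $s_i=A$; $f_i(T(s))-\pi_i+R_i\cdot\mathbf{1}[T(s)\neq I]$ if $s_i=X$; with $\pi_i<f_i(I)-c$ and $f_i(T)-\pi_i+R_i>c$ for all $T$ with $i\in T\neq I$. For a profile $s$, $(s_i',s_{-i})$ is $s$ with player $i$'s strategy replaced by $s_i'$. A pure Nash equilibrium is $s$ with $u_i(s)\ge u_i(s_i',s_{-i})$ for all $i,s_i'$. The strict deployment graph has vertex set the profiles and an arc $(s,s')$ iff $s'=(s_i',s_{-i})$ for some $i$ with $u_i(s')>u_i(s)$; the ordinal deployment graph has an arc $(s,s')$, $s'\neq s$, iff $s'=(s_i',s_{-i})$ for some $i$ with $u_i(s')\ge u_i(s)$. For either graph define $s\succeq s'$ iff there is a directed path (possibly of length $0$) from $s'$ to $s$, and $s\succ s'$ iff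 $s\succeq s'$ and not $s'\succeq s$; $s^*$ is maximal if no $s$ satisfies $s\succ s^*$. Weakly (resp. strongly) maximal states are maximal states for the strict (resp. ordinal) deployment graph. A game is weakly acyclic if all its weakly maximal states are pure Nash equilibria. *)

(* Defs.v *)
From HB Require Import structures.
From mathcomp Require Import all_boot all_order all_algebra.
Set Implicit Arguments. Unset Strict Implicit. Unset Printing Implicit Defensive.
Import Order.TTheory GRing.Theory Num.Theory.
Local Open Scope ring_scope.

(* Strategies of the insurance game: A (adopt), D (defect), X (adopt + insure). *)
Inductive strat := SA | SD | SX.

Definition strat_to (s : strat) : 'I_3 :=
  match s with SA => inord 0 | SD => inord 1 | SX => inord 2 end.
Definition strat_of (i : 'I_3) : strat :=
  match val i with 0 => SA | 1 => SD | _ => SX end.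
Lemma stratK : cancel strat_to strat_of.
Proof. by case; rewrite /strat_of /= inordK. Qed.

HB.instance Definition _ := Equality.copy strat (can_type stratK).
HB.instance Definition _ := Choice.copy strat (can_type stratK).
HB.instance Definition _ := Countable.copy strat (can_type stratK).
HB.instance Definition _ := Finite.copy strat (can_type stratK).

Definition profile (n : nat) := {ffun 'I_n -> strat}.

Definition allA (n : nat) : profile n := [ffun _ => SA].

Definition upd n (s : profile n) (i : 'I_n) (a : strat) : profile n :=
  [ffun j => if j == i then a else s j].

Definition adopters n (s : profile n) : {set 'I_n} := [set j | s j != SD].

(* Stag hunt hypotheses on (c, f). f i T is only meaningful when i \in T. *)
Definition stag_hunt (R : realFieldType) n (c : R) (f : 'I_n -> {set 'I_n} -> R) :=
  [/\ forall i (T T' : {set 'I_n}), i \in T -> T \proper T' -> f i T < f i T',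
      forall i, c < f i [set: 'I_n] &
      forall i, f i [set i] < c].

Definition insurance_params (R : realFieldType) n (c : R)
  (f : 'I_n -> {set 'I_n} -> R) (pi Rm : 'I_n -> R) :=
  [/\ forall i, 0 < pi i,
      forall i, pi i < f i [set: 'I_n] - c &
      forall i (T : {set 'I_n}), i \in T -> T != [set: 'I_n] ->
        c < f i T - pi i + Rm i].

Definition ins_payoff (R : realFieldType) n (c : R)
  (f : 'I_n -> {set 'I_n} -> R) (pi Rm : 'I_n -> R)
  (s : profile n) (i : 'I_n) : R :=
  match s i with
  | SD => c
  | SA => f i (adopters s)
  | SX => f i (adopters s) - pi i
          + (if adopters s != [set: 'I_n] then Rm i else 0)
  end.

Section Deployment.
Variables (R : realFieldType) (n : nat).
Variable u : profile n -> 'I_n -> R.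

Definition strict_arc : rel (profile n) := fun s s' =>
  [exists i, [exists a, (s' == upd s i a) && (u s i < u s' i)]].

Definition ordinal_arc : rel (profile n) := fun s s' =>
  (s' != s) && [exists i, [exists a, (s' == upd s i a) && (u s i <= u s' i)]].

Definition dge (e : rel (profile n)) (s s' : profile n) : bool := connect e s' s.
Definition dgt (e : rel (profile n)) (s s' : profile n) : bool :=
  dge e s s' && ~~ dge e s' s.

Definition maximal (e : rel (profile n)) (s : profile n) : Prop :=
  ~ exists s', dgt e s' s.

Definition weakly_maximal := maximal strict_arc.
Definition strongly_maximal := maximal ordinal_arc.

Definition pure_nash (s : profile n) : Prop :=
  forall i a, u (upd s i a) i <= u s i.

Definition weakly_acyclic : Prop :=
  forall s, weakly_maximal s -> pure_nash s.
End Deployment.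

(* Main.v *)
Require Import Defs.
From HB Require Import structures.
From mathcomp Require Import all_boot all_order all_algebra.
From mathcomp Require Import lra zify.
Import Order.TTheory GRing.Theory Num.Theory.
Local Open Scope ring_scope.

Lemma stratE (a b : strat) : (a == b) = match a, b with
  | SA, SA | SD, SD | SX, SX => true | _, _ => false end.
Proof. by case: a; case: b; [apply/eqP|apply/eqP|apply/eqP..]. Qed.

Section Aux.
Variables (R : realFieldType) (n : nat) (c : R)
  (f : 'I_n -> {set 'I_n} -> R) (pi Rm : 'I_n -> R).
Hypothesis Hs : stag_hunt c f.
Hypothesis Hp : insurance_params c f pi Rm.
Let u := ins_payoff c f pi Rm.

Definition w (a : strat) : nat := match a with SA => 0 | SX => 1 | SD => 2 end.
Definition m (s : profile n) : nat := (\sum_j w (s j))%N.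

Lemma updE (s : profile n) i a j : upd s i a j = if j == i then a else s j.
Proof. by rewrite /upd ffunE. Qed.

Lemma m_upd s i a : (m (upd s i a) + w (s i) = m s + w a)%N.
Proof.
rewrite /m (bigD1 i) //= [in RHS](bigD1 i) //= ffunE eqxx ?stratE.
rewrite (eq_bigr (fun j => w (s j))); last first.
  by move=> j /negbTE Hj; rewrite ffunE Hj.
by rewrite addnC [RHS]addnC !addnA [(w a + _)%N]addnC.
Qed.

Lemma arc_upd s i a : u s i < u (upd s i a) i -> strict_arc u s (upd s i a).
Proof.
move=> H; apply/existsP; exists i; apply/existsP; exists a; by rewrite eqxx H.
Qed.

Lemma step s : s != allA n ->
  exists i a, strict_arc u s (upd s i a) /\ (m (upd s i a) < m s)%N.
Proof.
case: Hs => H1 H2 H3; case: Hp => P1 P2 P3.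
move=> Hne.
case: (boolP [exists i, s i == SD]) => [/existsP [i /eqP Hi]|HD].
  exists i, SX; split; last by have := m_upd s i SX; rewrite Hi /=; lia.
  apply: arc_upd; rewrite /u /ins_payoff Hi ?updE ?ffunE eqxx ?stratE.
  set T := adopters _.
  have iT : i \in T by rewrite /T /adopters inE ?updE ?ffunE eqxx ?stratE.
  case: (boolP (T != [set: 'I_n])) => HT; first exact: P3.
  move/negPn/eqP: HT => ->; have := P2 i; lra.
have noD : forall j, s j != SD.
  by move: HD; rewrite negb_exists => /forallP.
case: (boolP [exists i, s i == SX]) => [/existsP [i /eqP Hi]|HX]; last first.
  exfalso; move/negP: Hne; apply; apply/eqP/ffunP => j; rewrite ?updE ?ffunE.
  have := noD j; rewrite stratE; case E: (s j) => //= _.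
  by case/negP: HX; apply/existsP; exists j; rewrite E stratE.
exists i, SA; split; last by have := m_upd s i SA; rewrite Hi /=; lia.
have AT : adopters s = [set: 'I_n].
  by apply/setP => j; rewrite !inE noD.
have AT' : adopters (upd s i SA) = [set: 'I_n].
  apply/setP => j; rewrite !inE ?updE ?ffunE; by case: (j == i); rewrite ?noD ?stratE.
apply: arc_upd; rewrite /u /ins_payoff Hi ?updE ?ffunE eqxx ?stratE AT AT' eqxx /=.
have := P1 i; lra.
Qed.

Lemma reach_k k s : (m s < k)%N -> connect (strict_arc u) s (allA n).
Proof.
elim: k s => // k IH s Hk.
case: (boolP (s == allA n)) => [/eqP ->|Hne]; first exact: connect0.
have [i [a [Ha Hm]]] := step s Hne.
apply: connect_trans (connect1 Ha) (IH _ _); lia.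
Qed.

Lemma reach s : connect (strict_arc u) s (allA n).
Proof. exact: (@reach_k (m s).+1). Qed.

Lemma strict_ord s s' : strict_arc u s s' -> ordinal_arc u s s'.
Proof.
move=> /existsP [i /existsP [a /andP [/eqP E H]]].
apply/andP; split.
  by apply/negP => /eqP E'; move: H; rewrite E' ltxx.
by apply/existsP; exists i; apply/existsP; exists a; apply/andP; split; [by rewrite E | exact: ltW].
Qed.

Lemma reach_ord s : connect (ordinal_arc u) s (allA n).
Proof. apply: (connect_sub _ (reach s)) => x y /strict_ord; exact: connect1. Qed.

Lemma allA_nash : pure_nash u (allA n).
Proof.
case: Hs => H1 H2 H3; case: Hp => P1 P2 P3.
have AT : adopters (allA n) = [set: 'I_n] by apply/setP => j; rewrite !inE ?updE ?ffunE ?stratE.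
move=> i a; rewrite /u /ins_payoff ?updE ?ffunE eqxx ?stratE AT.
case: a => /=.
- have -> : adopters (upd (allA n) i SA) = [set: 'I_n].
    by apply/setP => j; rewrite !inE ?updE ?ffunE; case: (j == i); rewrite ?updE ?ffunE ?stratE.
  by [].
- by have := H2 i; lra.
- have -> : adopters (upd (allA n) i SX) = [set: 'I_n].
    by apply/setP => j; rewrite !inE ?updE ?ffunE; case: (j == i); rewrite ?updE ?ffunE ?stratE.
  rewrite eqxx /=; have := P1 i; lra.
Qed.

Lemma no_out s' : ~~ ordinal_arc u (allA n) s'.
Proof.
apply/negP => /andP [Hne /existsP [i /existsP [a /andP [/eqP E H]]]].
subst s'.
have := allA_nash i a => H'.
have Eq : u (upd (allA n) i a) i = u (allA n) i by apply/eqP; rewrite eq_le H H'.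
clear H H'; case: a Hne Eq => Hne Eq.
- by move/negP: Hne; apply; apply/eqP/ffunP => j; rewrite ?updE ?ffunE; case: (j == i).
- case: Hs => _ H2 _; move: Eq; rewrite /u /ins_payoff ?updE ?ffunE eqxx ?stratE.
  have AT : adopters (allA n) = [set: 'I_n] by apply/setP => j; rewrite !inE ?updE ?ffunE ?stratE.
  rewrite AT => Eq; have := H2 i; lra.
- case: Hp => P1 _ _; move: Eq; rewrite /u /ins_payoff ?updE ?ffunE eqxx ?stratE.
  have AT : adopters (allA n) = [set: 'I_n] by apply/setP => j; rewrite !inE ?updE ?ffunE ?stratE.
  have -> : adopters (upd (allA n) i SX) = [set: 'I_n].
    by apply/setP => j; rewrite !inE ?updE ?ffunE; case: (j == i); rewrite ?updE ?ffunE ?stratE.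
  rewrite AT eqxx /= => Eq; have := P1 i; lra.
Qed.

Lemma from_allA s : connect (ordinal_arc u) (allA n) s -> s = allA n.
Proof.
move=> /connectP [[|x p] /= Hp' ->] //.
by move/andP: Hp' => [Hx _]; move: (no_out x); rewrite Hx.
Qed.

Lemma from_allA_s s : connect (strict_arc u) (allA n) s -> s = allA n.
Proof. move=> H; apply: from_allA; apply: (connect_sub _ H) => x y /strict_ord; exact: connect1. Qed.

End Aux.

Theorem theorem6 (R : realFieldType) (n : nat) (c : R)
  (f : 'I_n -> {set 'I_n} -> R) (pi Rm : 'I_n -> R) :
  stag_hunt c f ->
  insurance_params c f pi Rm ->
  let u := ins_payoff c f pi Rm in
  (weakly_maximal u (allA n) /\ (forall s, weakly_maximal u s -> s = allA n)) /\
  (strongly_maximal u (allA n) /\ (forall s, strongly_maximal u s -> s = allA n)) /\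
  weakly_acyclic u.
Proof.
move=> Hs Hp u.
have wmax : weakly_maximal u (allA n).
  by move=> [s' /andP [_ /negP]]; apply; exact: reach.
have wuniq : forall s, weakly_maximal u s -> s = allA n.
  move=> s Hm; apply/eqP; apply/negPn/negP => Hne; apply: Hm; exists (allA n).
  apply/andP; split; first exact: reach.
  by apply/negP => /(@from_allA_s _ _ _ _ _ _ Hs Hp) E; move/negP: Hne; rewrite E.
split; first by split.
split; last first.
  by move=> s /wuniq ->; exact: allA_nash.
split.
  by move=> [s' /andP [_ /negP]]; apply; exact: reach_ord.
move=> s Hm; apply/eqP; apply/negPn/negP => Hne; apply: Hm; exists (allA n).
apply/andP; split; first exact: reach_ord.
by apply/negP => /(@from_allA _ _ _ _ _ _ Hs Hp) E; move/negP: Hne; rewrite E.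
Qed.
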